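(* Let $G(q)$ be a finite Chevalley group over $\mathbb{F}_q$ and let $P\subset G(q)$ be a proper parabolic subgroup. Then for every $g\in G(q)\setminus P$ one has $$ r_{PgP}(x) \le \frac{2|P|}{q} \quad\text{for all } x\in G(q).$$
   Context: $G(q)$ is a (possibly twisted) finite Chevalley group over the finite field $\mathbb{F}_q$ ($q$ a prime power), with its standard BN-pair structure: a Borel subgroup $B=UH$ with $U$ the unipotent radical and $H$ a Cartan subgroup. A parabolic subgroup is a subgroup of $G(q)$ containing a Borel subgroup. For $g\in G(q)$ and $x\in G(q)$, $r_{PgP}(x)$ denotes the number of pairs $(a,b)\in P\times P$ with $agb=x$. *)

(* Defs.v *)
From mathcomp Require Import all_boot all_fingroup all_solvable.
Set Implicit Arguments. Unset Strict Implicit. Unset Printing Implicit Defensive.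
Import GroupScope.

Definition BN_pair (gT : finGroupType) (G B N : {group gT})
    (S : {set coset_of (B :&: N)}) : Prop :=
  [/\ B \subset G, N \subset G, G :=: <<B :|: N>> & (B :&: N) <| N] /\
  [/\ S \subset N / (B :&: N),
      <<S>> = N / (B :&: N),
      (forall s, s \in S -> s != 1 /\ s ^+ 2 = 1),
      (forall s w, s \in S -> w \in N / (B :&: N) ->
          (val s : {set gT}) * B * val w \subset
            (B * val w * B) :|: (B * val (s * w) * B))
    & (forall s, s \in S -> (val s : {set gT}) * B * val s != B)].
Arguments BN_pair {gT} G B N S.

(* Split BN-pair of characteristic p with parameters at least q:
   B = U ><| H with U a normal p-subgroup and H = B :&: N, and for every
   simple reflection s one has |BsB| >= q |B| (i.e. q_s >= q). *)
Definition split_BN_pair_over (gT : finGroupType) (G B N U : {group gT})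
    (S : {set coset_of (B :&: N)}) (p q : nat) : Prop :=
  [/\ BN_pair G B N S,
      prime p & (exists2 k, 0 < k & q = p ^ k)%N] /\
  [/\ U <| B, p.-group U,
      U ><| (B :&: N) = B
    & (forall s, s \in S -> q * #|B| <= #|(B * (val s : {set gT}) * B)%g|)%N].
Arguments split_BN_pair_over {gT} G B N U S p q.

Definition parabolic (gT : finGroupType) (G B P : {group gT}) : Prop :=
  B \subset P /\ P \subset G.

Definition r_dc (gT : finGroupType) (P : {set gT}) (g x : gT) : nat :=
  #|[set ab : gT * gT | [&& ab.1 \in P, ab.2 \in P & ab.1 * g * ab.2 == x]]|.

(* Main.v *)
Require Import Defs.
From mathcomp Require Import all_boot all_fingroup all_solvable.
Import GroupScope.
Set Implicit Arguments. Unset Strict Implicit. Unset Printing Implicit Defensive.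

Section BN.
Variables (gT : finGroupType) (G B N : {group gT}) (S : {set coset_of (B :&: N)}).
Hypothesis hBN : BN_pair G B N S.

Local Notation Hg := (B :&: N).

Definition Dc (x : gT) : {set gT} := B :* x * B.

Lemma DcP x y : reflect (exists b1, exists b2, [/\ b1 \in B, b2 \in B & y = b1 * x * b2]) (y \in Dc x).
Proof.
apply: (iffP mulsgP) => [[z b2 /rcosetP[b1 Hb1 ->] Hb2 ->]|[b1 [b2 [Hb1 Hb2 ->]]]].
  by exists b1, b2.
by exists (b1 * x) b2 => //; apply/rcosetP; exists b1.
Qed.

Lemma Dc_refl x : x \in Dc x.
Proof. by apply/DcP; exists 1, 1; rewrite !group1 mulg1 mul1g. Qed.

Lemma DcBl b x y : b \in B -> y \in Dc x -> b * y \in Dc x.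
Proof.
move=> Hb /DcP[b1 [b2 [H1 H2 ->]]]; apply/DcP; exists (b * b1), b2.
by rewrite groupM // !mulgA.
Qed.

Lemma DcBr b x y : b \in B -> y \in Dc x -> y * b \in Dc x.
Proof.
move=> Hb /DcP[b1 [b2 [H1 H2 ->]]]; apply/DcP; exists b1, (b2 * b).
by rewrite groupM // !mulgA.
Qed.

Lemma Dc_eq x y : y \in Dc x -> Dc y = Dc x.
Proof.
move=> /DcP[b1 [b2 [H1 H2 ->]]]; apply/setP => z; apply/DcP/DcP.
  case=> [c1 [c2 [K1 K2 ->]]]; exists (c1 * b1), (b2 * c2).
  by rewrite !groupM // !mulgA.
case=> [c1 [c2 [K1 K2 ->]]]; exists (c1 * b1^-1), (b2^-1 * c2).
rewrite !groupM ?groupV //; split=> //.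
by rewrite !mulgA mulgVK mulgK.
Qed.

Lemma Dc_inv x y : y \in Dc x -> y^-1 \in Dc x^-1.
Proof.
move=> /DcP[b1 [b2 [H1 H2 ->]]]; apply/DcP; exists b2^-1, b1^-1.
by rewrite !groupV !invMg !mulgA.
Qed.

Lemma Dc_sub x y : x \in B -> y \in Dc x -> y \in B.
Proof. by move=> Hx /DcP[b1 [b2 [H1 H2 ->]]]; rewrite !groupM. Qed.

Lemma sHB : Hg \subset B. Proof. exact: subsetIl. Qed.

Lemma nHN : N \subset 'N(Hg).
Proof. by case: hBN => [[_ _ _ /normal_norm]]. Qed.

Lemma NnH n : n \in N -> n \in 'N(Hg).
Proof. by move/(subsetP nHN). Qed.

Lemma coset_inH n : n \in N -> coset Hg n = 1 -> n \in B.
Proof. by move=> Nn /(coset_idr (NnH Nn)) /(subsetP sHB). Qed.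

Lemma coset_eqD n n' : n \in N -> n' \in N -> coset Hg n = coset Hg n' -> Dc n = Dc n'.
Proof.
move=> Nn Nn' E.
have: coset Hg (n * n'^-1) = 1.
  rewrite morphM ?groupV ?NnH // morphV ?NnH //.
  by change (coset Hg n * (coset Hg n')^-1 = 1); rewrite E mulgV.
move/coset_inH; rewrite groupM ?groupV // => /(_ isT) Hb.
apply: Dc_eq; rewrite -[n](mulgVK n'); apply: DcBl => //; exact: Dc_refl.
Qed.


Lemma S_sub : S \subset N / Hg.
Proof. by case: hBN => _ [->]. Qed.

Lemma S_prop s : s \in S -> s != 1 /\ s ^+ 2 = 1.
Proof. by case: hBN => _ [_ _ Hs _ _]; apply: Hs. Qed.

Lemma Sss s : s \in S -> s * s = 1.
Proof. by move/S_prop => [_ <-]. Qed.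

Lemma Sinv s : s \in S -> s^-1 = s.
Proof. by move=> Hs; apply/eqP; rewrite eq_invg_mul Sss. Qed.

Lemma repW w : w \in N / Hg -> exists2 n, n \in N & coset Hg n = w.
Proof. by case/morphimP => n _ Nn ->; exists n. Qed.

Lemma valD n : n \in N -> B * val (coset Hg n) * B = Dc n.
Proof.
move=> Nn; have -> : val (coset Hg n) = Hg :* n by exact: val_coset (NnH Nn).
by rewrite /Dc mulgA mulGSid // sHB.
Qed.

Lemma axL ns n b : ns \in N -> coset Hg ns \in S -> n \in N -> b \in B ->
  ns * b * n \in Dc n :|: Dc (ns * n).
Proof.
move=> Nns Sns Nn Bb.
case: hBN => _ [_ _ _ Hax _].
have := Hax _ (coset Hg n) Sns (mem_quotient _ Nn).
rewrite -morphM ?NnH // !valD ?groupM // => /subsetP; apply.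
have -> : val (coset Hg ns) = Hg :* ns by exact: val_coset (NnH Nns).
have -> : val (coset Hg n) = Hg :* n by exact: val_coset (NnH Nn).
by rewrite !mem_mulg // rcoset_refl.
Qed.


Lemma cosetSV nx : nx \in N -> coset Hg nx \in S -> coset Hg nx^-1 \in S.
Proof. by move=> Nx Sx; rewrite morphV ?NnH // Sinv. Qed.

Lemma axR n nx b : n \in N -> nx \in N -> coset Hg nx \in S -> b \in B ->
  n * b * nx \in Dc n :|: Dc (n * nx).
Proof.
move=> Nn Nx Sx Bb.
have := axL (groupVr Nx) (cosetSV Nx Sx) (groupVr Nn) (groupVr Bb).
have E : nx^-1 * b^-1 * n^-1 = (n * b * nx)^-1 by rewrite !invMg mulgA.
rewrite E !inE => /orP[] /Dc_inv; rewrite !invgK.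
  by move=> ->.
by rewrite invMg !invgK => ->; rewrite orbT.
Qed.


Definition word (t : seq (coset_of Hg)) := all (fun x => x \in S) t.
Definition prodw (t : seq (coset_of Hg)) := \prod_(x <- t) x.

Definition haslen (w : coset_of Hg) k :=
  [exists t : k.-tuple (coset_of Hg), word t && (prodw t == w)].

Lemma haslenP w k :
  reflect (exists t, [/\ size t = k, word t & prodw t = w]) (haslen w k).
Proof.
apply: (iffP existsP) => [[t /andP[Ht /eqP Hp]]|[t [Hs Ht Hp]]].
  by exists (val t); rewrite size_tuple.
have Hs' : size t == k by apply/eqP.
by exists (Tuple Hs'); rewrite /= Ht Hp eqxx.
Qed.

Lemma word_in t : word t -> prodw t \in N / Hg.
Proof.
elim: t => [|x t IH] /=; first by rewrite /prodw big_nil group1.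
case/andP=> Sx Ht; rewrite /prodw big_cons groupM //; last exact: IH.
exact: (subsetP S_sub).
Qed.

Lemma words w : w \in N / Hg -> exists k, haslen w k.
Proof.
case: hBN => _ [_ genS _ _ _].
rewrite -genS => /gen_prodgP[m [c Hc ->]].
exists m; apply/haslenP; exists [seq c i | i <- index_enum 'I_m]; split.
- by rewrite size_map /index_enum unlock -enumT size_enum_ord.
- by rewrite /word all_map; apply/allP => i _ /=.
- by rewrite /prodw big_map.
Qed.

Lemma lenex w : exists k, (w \notin N / Hg) || haslen w k.
Proof.
case: (boolP (w \in N / Hg)) => Hw; last by exists 0.
by case: (words Hw) => k Hk; exists k.
Qed.

Definition len w := ex_minn (lenex w).

Lemma lenP w : w \in N / Hg -> haslen w (len w).
Proof. by move=> Hw; rewrite /len; case: ex_minnP => m; rewrite Hw. Qed.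

Lemma len_min w k : haslen w k -> len w <= k.
Proof. by move=> Hk; rewrite /len; case: ex_minnP => m _ ->; rewrite ?Hk ?orbT. Qed.

Lemma haslen_cons s w k : s \in S -> haslen w k -> haslen (s * w) k.+1.
Proof.
move=> Ss /haslenP[t [Hs Ht Hp]]; apply/haslenP; exists (s :: t).
by rewrite /= Hs /word /= Ss /prodw big_cons; split=> //; rewrite -Hp.
Qed.

Lemma haslen_rcons s w k : s \in S -> haslen w k -> haslen (w * s) k.+1.
Proof.
move=> Ss /haslenP[t [Hs Ht Hp]]; apply/haslenP; exists (rcons t s).
rewrite size_rcons Hs /word all_rcons Ss /prodw big_rcons /=; split=> //.
by rewrite -Hp.
Qed.

Lemma lenL s w : s \in S -> w \in N / Hg -> len (s * w) <= (len w).+1.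
Proof. by move=> Ss Hw; apply/len_min/haslen_cons/lenP. Qed.

Lemma lenR s w : s \in S -> w \in N / Hg -> len (w * s) <= (len w).+1.
Proof. by move=> Ss Hw; apply/len_min/haslen_rcons/lenP. Qed.

Lemma SinW s : s \in S -> s \in N / Hg.
Proof. exact: (subsetP S_sub). Qed.

Lemma lenL' s w : s \in S -> w \in N / Hg -> len w <= (len (s * w)).+1.
Proof.
move=> Ss Hw; have {1}-> : w = s * (s * w) by rewrite mulgA Sss // mul1g.
by apply: lenL; rewrite // groupM // SinW.
Qed.

Lemma lenR' s w : s \in S -> w \in N / Hg -> len w <= (len (w * s)).+1.
Proof.
move=> Ss Hw; have {1}-> : w = (w * s) * s by rewrite -mulgA Sss // mulg1.
by apply: lenR; rewrite // groupM // SinW.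
Qed.

Lemma len0 w : w \in N / Hg -> len w = 0 -> w = 1.
Proof.
move=> Hw E; have := lenP Hw; rewrite E => /haslenP[[|x t] [Hs _ <-]] //.
by rewrite /prodw big_nil.
Qed.

Lemma decL w k : w \in N / Hg -> len w = k.+1 -> exists2 s, s \in S & len (s * w) = k.
Proof.
move=> Hw E; have := lenP Hw; rewrite E => /haslenP[[|s t] [//= [Hs] /andP[Ss Ht] Hp]].
exists s => //; apply/eqP; rewrite eqn_leq; apply/andP; split.
  apply: len_min; apply/haslenP; exists t; split=> //.
  by rewrite -Hp /prodw big_cons mulgA Sss // mul1g.
by rewrite -ltnS -E lenL'.
Qed.

Lemma decR w k : w \in N / Hg -> len w = k.+1 -> exists2 s, s \in S & len (w * s) = k.
Proof.
move=> Hw E; have := lenP Hw; rewrite E => /haslenP[t [Hs Ht Hp]].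
move: Hs Ht Hp; case/lastP: t => [//|t s]; rewrite size_rcons /word all_rcons.
case=> Hs /andP[Ss Ht] Hp.
exists s => //; apply/eqP; rewrite eqn_leq; apply/andP; split.
  apply: len_min; apply/haslenP; exists t; split=> //.
  by rewrite -Hp /prodw big_rcons /= -mulgA Sss // mulg1.
by rewrite -ltnS -E lenR'.
Qed.


Lemma cosetM n m : n \in N -> m \in N -> coset Hg (n * m) = coset Hg n * coset Hg m.
Proof. by move=> Nn Nm; rewrite morphM ?NnH. Qed.

Lemma cosetV n : n \in N -> coset Hg n^-1 = (coset Hg n)^-1.
Proof. by move=> Nn; rewrite morphV ?NnH. Qed.

Lemma cosetN n : n \in N -> coset Hg n \in N / Hg.
Proof. exact: mem_quotient. Qed.

Lemma Uq_aux k : forall n n', n \in N -> n' \in N -> len (coset Hg n) <= k ->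
  len (coset Hg n) <= len (coset Hg n') -> Dc n = Dc n' -> coset Hg n = coset Hg n'.
Proof.
elim: k => [|k IH] n n' Nn Nn' Hk Hle HD.
  have E : len (coset Hg n) = 0 by apply/eqP; rewrite -leqn0.
  have c1 := len0 (cosetN Nn) E.
  have Bn := coset_inH Nn c1.
  have Bn' : n' \in B by apply: (Dc_sub Bn); rewrite HD Dc_refl.
  by rewrite c1; apply/esym/coset_id; rewrite inE Bn' Nn'.
case: (leqP (len (coset Hg n)) k) => Hk'; first exact: IH.
have E : len (coset Hg n) = k.+1 by apply/eqP; rewrite eqn_leq Hk Hk'.
case: (decR (cosetN Nn) E) => x Sx Ex.
case: (repW (SinW Sx)) => nx Nx cx.
have Sx' : coset Hg nx \in S by rewrite cx.
set n0 := n * nx^-1.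
have Nn0 : n0 \in N by rewrite groupM ?groupV.
have c0 : coset Hg n0 = coset Hg n * x by rewrite /n0 cosetM ?groupV // cosetV // cx Sinv.
have Nn'' : n' * nx^-1 \in N by rewrite groupM ?groupV.
have : n0 \in Dc n' :|: Dc (n' * nx^-1).
  have : n \in Dc n' by rewrite -HD Dc_refl.
  case/DcP => b1 [b2 [B1 B2 En]].
  have := axR Nn' (groupVr Nx) (cosetSV Nx Sx') B2.
  have -> : n0 = b1 * (n' * b2 * nx^-1) by rewrite /n0 En !mulgA.
  by rewrite !inE => /orP[] Hm; rewrite (DcBl B1 Hm) ?orbT.
rewrite inE => /orP[] /Dc_eq HD0.
  have Hle' : k < len (coset Hg n') by rewrite -E.
  have := IH n0 n' Nn0 Nn'; rewrite c0 Ex leqnn => /(_ isT (ltnW Hle') HD0) E0.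
  by move: Hle'; rewrite -E0 Ex ltnn.
have := IH n0 _ Nn0 Nn''; rewrite c0 Ex leqnn.
have Hk2 : k <= len (coset Hg (n' * nx^-1)).
  rewrite cosetM ?groupV // cosetV // cx Sinv //.
  by rewrite -ltnS -E (leq_trans Hle) // lenR' // cosetN.
move/(_ isT Hk2 HD0); rewrite cosetM ?groupV // cosetV // cx Sinv //.
exact: mulIg.
Qed.

Lemma Uq n n' : n \in N -> n' \in N -> Dc n = Dc n' -> coset Hg n = coset Hg n'.
Proof.
move=> Nn Nn' HD.
case: (leqP (len (coset Hg n)) (len (coset Hg n'))) => Hle.
  exact: (Uq_aux Nn Nn' (leqnn _) Hle HD).
by apply/esym; apply: (Uq_aux Nn' Nn (leqnn _) (ltnW Hle)).
Qed.


Lemma Sne1 s : s \in S -> s != 1.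
Proof. by case/S_prop. Qed.

Lemma delX s ns t : s \in S -> ns \in N -> coset Hg ns = s ->
  word t -> forall n b, n \in N -> coset Hg n = prodw t -> b \in B ->
  ns * b * n \in Dc n ->
  exists t', [/\ (size t').+1 = size t, word t' & prodw t' = s * prodw t].
Proof.
move=> Ss Nns cns; elim/last_ind: t => [|t1 x IH] Ht n b Nn cn Bb Hin.
  rewrite /prodw big_nil in cn.
  have Bn := coset_inH Nn cn.
  have Bns : ns \in B.
    have -> : ns = ns * b * n * n^-1 * b^-1 by rewrite !mulgK.
    apply: groupM; last by rewrite groupV.
    by apply: groupM; [exact: (Dc_sub Bn Hin)|rewrite groupV].
  have : coset Hg ns = 1 by apply: coset_id; rewrite inE Bns Nns.
  by rewrite cns => E; move: (Sne1 Ss); rewrite E eqxx.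
move: Ht; rewrite /word all_rcons => /andP[Sx Ht1].
case: (repW (SinW Sx)) => nx Nx cx.
have Sx' : coset Hg nx \in S by rewrite cx.
set n1 := n * nx^-1.
have Nn1 : n1 \in N by rewrite groupM ?groupV.
have cn1 : coset Hg n1 = prodw t1.
  rewrite /n1 cosetM ?groupV // cosetV // cx Sinv // cn /prodw big_rcons /=.
  by rewrite -mulgA Sss // mulg1.
have Sns : coset Hg ns \in S by rewrite cns.
have := axL Nns Sns Nn1 Bb; rewrite inE => /orP[] H1.
  case: (IH Ht1 n1 b Nn1 cn1 Bb H1) => t1' [Hs Hw Hp].
  exists (rcons t1' x); rewrite !size_rcons Hs /word all_rcons Sx; split=> //.
  by rewrite /prodw !big_rcons /= -/(prodw t1') -/(prodw t1) Hp mulgA.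
have Nsn1 : ns * n1 \in N by rewrite groupM.
have Hy : ns * b * n \in Dc (ns * n1) :|: Dc (ns * n).
  case/DcP: H1 => b1 [b2 [B1 B2 E1]].
  have := axR Nsn1 Nx Sx' B2.
  have -> : ns * n1 * nx = ns * n by rewrite /n1 -!mulgA mulVg mulg1.
  have -> : ns * b * n = b1 * (ns * n1 * b2 * nx).
    have -> : ns * b * n = ns * b * n1 * nx by rewrite /n1 -!mulgA mulVg mulg1.
    by rewrite E1 !mulgA.
  by rewrite !inE => /orP[] Hm; rewrite (DcBl B1 Hm) ?orbT.
have HDy := Dc_eq Hin.
move: Hy; rewrite inE => /orP[] /Dc_eq; rewrite HDy => /Uq.
  move=> /(_ Nn Nsn1); rewrite cosetM // cn1 cns => E.
  exists t1; rewrite size_rcons; split=> //.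
  by rewrite -cn E mulgA Sss // mul1g.
move=> /(_ Nn (groupM Nns Nn)); rewrite cosetM // cns => E.
have : s = 1 by apply: (@mulIg _ (coset Hg n)); rewrite mul1g.
by move=> E1; move: (Sne1 Ss); rewrite E1 eqxx.
Qed.

Lemma upL s ns n b : s \in S -> ns \in N -> coset Hg ns = s -> n \in N ->
  len (coset Hg n) <= len (s * coset Hg n) -> b \in B -> ns * b * n \in Dc (ns * n).
Proof.
move=> Ss Nns cns Nn Hl Bb.
have Sns : coset Hg ns \in S by rewrite cns.
have := axL Nns Sns Nn Bb; rewrite inE => /orP[] // Hin.
case/haslenP: (lenP (cosetN Nn)) => t [Hs Ht Hp].
case: (delX Ss Nns cns Ht Nn (esym Hp) Bb Hin) => t' [Hs' Hw' Hp'].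
have : len (s * coset Hg n) <= size t' by apply: len_min; apply/haslenP; exists t'; split=> //; rewrite Hp' Hp.
have H2 : size t' < len (coset Hg n) by rewrite -Hs -Hs'.
by move=> H; have := leq_ltn_trans H H2; rewrite ltnNge Hl.
Qed.


Lemma stepW t : word t -> forall a, a \in N -> coset Hg a = prodw t ->
  forall y n, n \in N -> y \in Dc n -> exists2 n', n' \in N & a * y \in Dc n'.
Proof.
elim: t => [|x t IH] /= Ht a Na ca y n Nn Hy.
  rewrite /prodw big_nil in ca.
  by exists n => //; apply: DcBl => //; apply: coset_inH.
case/andP: Ht => Sx Ht.
case: (repW (SinW Sx)) => nx Nx cx.
have Sx' : coset Hg nx \in S by rewrite cx.
have Na' : nx^-1 * a \in N by rewrite groupM ?groupV.
have ca' : coset Hg (nx^-1 * a) = prodw t.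
  rewrite cosetM ?groupV // cosetV // cx Sinv // ca /prodw big_cons mulgA Sss //.
  by rewrite mul1g.
case: (IH Ht _ Na' ca' y n Nn Hy) => n' Nn' /DcP[b1 [b2 [B1 B2 E]]].
have := axL Nx Sx' Nn' B1.
have -> : a * y = nx * b1 * n' * b2.
  have -> : nx * b1 * n' * b2 = nx * (b1 * n' * b2) by rewrite !mulgA.
  by rewrite -E !mulgA mulgV mul1g.
rewrite inE => /orP[] Hm.
  by exists n' => //; apply: DcBr.
by exists (nx * n'); rewrite ?groupM //; apply: DcBr.
Qed.

Lemma bruhat g : g \in G -> exists2 n, n \in N & g \in Dc n.
Proof.
case: hBN => [[_ _ defG _] _]; rewrite defG => /gen_prodgP[m [c Hc ->]].
elim: m c Hc => [|m IH] c Hc.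
  by exists 1; rewrite ?group1 // big_ord0 Dc_refl.
rewrite big_ord_recl.
case: (IH (fun i => c (lift ord0 i))) => [i|n Nn Hy]; first exact: Hc.
have := Hc ord0; rewrite inE => /orP[] Hc0.
  by exists n => //; apply: DcBl.
case/haslenP: (lenP (cosetN Hc0)) => t [_ Ht Hp].
exact: (stepW Ht Hc0 (esym Hp) Nn Hy).
Qed.


Lemma BgPP (X Y : {set gT}) x y :
  reflect (exists a, exists c, [/\ a \in X, c \in Y & y = a * x * c]) (y \in X :* x * Y).
Proof.
apply: (iffP mulsgP) => [[z b2 /rcosetP[b1 Hb1 ->] Hb2 ->]|[b1 [b2 [Hb1 Hb2 ->]]]].
  by exists b1, b2.
by exists (b1 * x) b2 => //; apply/rcosetP; exists b1.
Qed.

Lemma cardDc ns : #|Dc ns| = #|B * B :^ ns^-1|.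
Proof.
rewrite -(card_rcoset _ ns^-1); congr #|_|.
by rewrite conjsgE invgK /Dc !mulgA.
Qed.

Lemma key (P : {group gT}) q g :
  (forall s, s \in S -> q * #|B| <= #|B * val s * B|) ->
  B \subset P -> g \in G -> g \notin P -> #|P :&: P :^ g^-1| * q <= #|P|.
Proof.
move=> hq sBP Gg nPg.
case: (bruhat Gg) => n0 Nn0 /DcP[b1 [b2 [B1 B2 Eg]]].
pose A := [set n in N | n \in B :* g * P].
have n0A : n0 \in A.
  rewrite inE Nn0; apply/BgPP; exists b1^-1, b2^-1; rewrite !groupV B1 (subsetP sBP) //.
  by split=> //; rewrite Eg !mulgA mulVg mul1g mulgK.
case: (arg_minnP (fun n => len (coset Hg n)) n0A) => n nA nmin.
have : n \in A := nA.
rewrite inE => /andP[Nn /BgPP[b [p [Bb Pp En]]]].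
have nminA : forall j, j \in N -> j \in B :* g * P -> len (coset Hg n) <= len (coset Hg j).
  by move=> j Nj Hj; apply: nmin; have : j \in A by rewrite inE Nj Hj.
case E : (len (coset Hg n)) => [|k].
  have Bn := coset_inH Nn (len0 (cosetN Nn) E).
  case/negP: nPg.
  have -> : g = b^-1 * n * p^-1 by rewrite En !mulgA mulVg mul1g mulgK.
  by rewrite !groupM ?groupV // (subsetP sBP).
case: (decL (cosetN Nn) E) => s Ss Es.
case: (repW (SinW Ss)) => ns Nns cns.
have Sns : coset Hg ns \in S by rewrite cns.
set n' := ns^-1 * n.
have Nn' : n' \in N by rewrite groupM ?groupV.
have cn' : coset Hg n' = s * coset Hg n by rewrite cosetM ?groupV // cosetV // cns Sinv.
have claim : forall y, y \in B -> n^-1 * y * n \in P -> ns^-1 * y * ns \in B.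
  move=> y By Py; apply/negPn/negP => Hc.
  have Bss : ns * ns \in B by apply: coset_inH; rewrite ?groupM // cosetM // cns Sss.
  have Ec : ns^-1 * y * ns = (ns * ns)^-1 * (ns * y * ns).
    by rewrite invMg !mulgA mulgVK.
  have := axL Nns Sns Nns By; rewrite inE => /orP[] Hm; last first.
    by case/negP: Hc; rewrite Ec groupM ?groupV // (Dc_sub Bss Hm).
  have : ns^-1 * y * ns \in Dc ns by rewrite Ec DcBl ?groupV.
  case/DcP => c1 [c2 [C1 C2 Ec2]].
  have Hl : len (coset Hg n') <= len (s * coset Hg n').
    by rewrite cn' mulgA Sss // mul1g Es E.
  have := upL Ss Nns cns Nn' Hl C2.
  have -> : ns * n' = n by rewrite /n' mulgA mulgV mul1g.
  move=> Hu.
  have : n' * (n^-1 * y * n) \in Dc n.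
    have -> : n' * (n^-1 * y * n) = c1 * (ns * c2 * n').
      have -> : c1 * (ns * c2 * n') = ns^-1 * y * ns * n' by rewrite Ec2 !mulgA.
      by rewrite /n' !mulgA !mulgK.
    exact: DcBl.
  case/DcP => d1 [d2 [D1 D2 Ed]].
  have : n' \in B :* g * P.
    apply/BgPP; exists (d1 * b), (p * d2 * (n^-1 * y * n)^-1).
    rewrite groupM // !groupM ?groupV // ?(subsetP sBP) //; split=> //.
    have -> : n' = n' * (n^-1 * y * n) * (n^-1 * y * n)^-1 by rewrite mulgK.
    by rewrite Ed En !mulgA.
  move/(nminA _ Nn'); rewrite cn' Es E ltnn.
  done.
have hK : q * #|B :&: B :^ ns^-1| <= #|B|.
  have h1 := hq s Ss; rewrite -cns valD // cardDc in h1.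
  have h2 := mul_cardG B (B :^ ns^-1)%G; rewrite /= cardJg in h2.
  rewrite -(leq_pmul2l (cardG_gt0 B)) mulnA (mulnC #|B| q) h2.
  by rewrite leq_mul2r h1 orbT.
have hBY : #|B :&: (P :&: P :^ g^-1)| <= #|B :&: B :^ ns^-1|.
  rewrite -(cardJg _ b^-1); apply: subset_leq_card; apply/subsetP => z.
  rewrite mem_conjg invgK !inE mem_conjg invgK => /and3P[Bz Pz Pzg].
  have Bz' : z \in B by rewrite -(groupJr z Bb).
  rewrite Bz' /= mem_conjg invgK conjgE mulgA; apply: claim => //.
  by rewrite -mulgA -conjgE En !conjgM groupJ.
have hmul := mul_cardG B (P :&: P :^ g^-1)%G.
have hBYP : #|B * (P :&: P :^ g^-1)| <= #|P|.
  by apply: subset_leq_card; apply: mul_subG => //; apply: subsetIl.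
rewrite -(leq_pmul2l (cardG_gt0 B)) mulnA hmul.
rewrite -mulnA mulnC; apply: leq_mul => //.
by rewrite mulnC (leq_trans _ hK) // leq_mul2l hBY orbT.
Qed.

End BN.
Lemma rdc_le (gT : finGroupType) (P : {group gT}) g x :
  r_dc P g x <= #|P :&: P :^ g^-1|.
Proof.
rewrite /r_dc; set R := [set ab : gT * gT | _].
case: (set_0Vmem R) => [->|[[a0 b0] H0]]; first by rewrite cards0.
move: (H0); rewrite inE /= => /and3P[Pa0 Pb0 /eqP E0].
have inj : {in R &, injective (fun ab : gT * gT => a0^-1 * ab.1)}.
  move=> [a b] [a' b']; rewrite !inE /= => /and3P[Pa Pb /eqP E] /and3P[Pa' Pb' /eqP E'].
  move/(congr1 (fun u => a0 * u)); rewrite !mulKVg => Ea; subst a'.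
  by congr pair; apply: (@mulgI _ (a * g)); rewrite E E'.
rewrite -(card_in_imset inj); apply: subset_leq_card.
apply/subsetP => z /imsetP[[a b]]; rewrite inE /= => /and3P[Pa Pb /eqP E] ->.
rewrite inE groupM ?groupV //= mem_conjg invgK.
have Ea : a = x * b^-1 * g^-1 by rewrite -E !mulgK.
have Ea0 : a0 = x * b0^-1 * g^-1 by rewrite -E0 !mulgK.
have -> : (a0^-1 * a) ^ g = b0 * b^-1.
  rewrite Ea Ea0 conjgE !invMg !invgK !mulgA.
  by rewrite mulVg mul1g !mulgVK.
by rewrite groupM ?groupV.
Qed.

Theorem lemma10 (gT : finGroupType) (G B N U P : {group gT})
    (S : {set coset_of (B :&: N)}) (p q : nat) :
  split_BN_pair_over G B N U S p q ->
  parabolic G B P -> P != G ->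
  forall g, g \in G -> g \notin P ->
  forall x, x \in G -> (r_dc P g x * q <= 2 * #|P|)%N.
Proof.
move=> [[hBN _ _] [_ _ _ hq]] [sBP _] _ g Gg nPg x _.
apply: (@leq_trans (#|P :&: P :^ g^-1| * q)).
  by rewrite leq_mul2r rdc_le orbT.
apply: leq_trans (key hBN hq sBP Gg nPg) _.
by rewrite leq_pmull.
Qed.
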